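(* Let $k$ be an integer. If a graph $T$ is a maximum $\mathsf{TJ}_k$-graph, then for every integer $n \geq k$, $T$ is a maximum $\mathsf{TJ}_n$-graph.
   Context: Graphs are finite, simple, undirected. $\mathsf{TJ}_k(G)$ is the graph on the cliques of $G$ of size $k$ where $C, C'$ are adjacent iff $|C \setminus C'| = |C' \setminus C| = 1$. A graph $T$ is a $\mathsf{TJ}_k$-graph if $T \cong \mathsf{TJ}_k(G)$ for some graph $G$, and a maximum $\mathsf{TJ}_k$-graph if $T \cong \mathsf{TJ}_k(G)$ for some graph $G$ with $\omega(G) = k$, where $\omega(G)$ is the maximum clique size of $G$. *)

(* Defs.v *)
From mathcomp Require Import all_boot.
Set Implicit Arguments. Unset Strict Implicit. Unset Printing Implicit Defensive.

Record sgraph := SGraph {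
  vert :> finType;
  adj : rel vert;
  adj_sym : symmetric adj;
  adj_irr : irreflexive adj }.

Definition is_clique (G : sgraph) (C : {set G}) : bool :=
  [forall x in C, forall y in C, (x != y) ==> adj x y].

Definition clique_number (G : sgraph) : nat :=
  \max_(C : {set G} | is_clique C) #|C|.

Definition kclique (G : sgraph) (k : nat) :=
  {C : {set G} | is_clique C && (#|C| == k)}.

Definition tj_adj (G : sgraph) (k : nat) : rel (kclique G k) :=
  fun C D => (#|val C :\: val D| == 1) && (#|val D :\: val C| == 1).

Lemma tj_adj_sym (G : sgraph) (k : nat) : symmetric (@tj_adj G k).
Proof. by move=> C D; rewrite /tj_adj andbC. Qed.

Lemma tj_adj_irr (G : sgraph) (k : nat) : irreflexive (@tj_adj G k).
Proof. by move=> C; rewrite /tj_adj setDv cards0. Qed.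

Definition TJ (k : nat) (G : sgraph) : sgraph :=
  @SGraph (kclique G k) (@tj_adj G k) (@tj_adj_sym G k) (@tj_adj_irr G k).

Definition isomorphic (G H : sgraph) : Prop :=
  exists f : G -> H, bijective f /\ forall x y, adj (f x) (f y) = adj x y.

Definition max_TJ_graph (k : nat) (T : sgraph) : Prop :=
  exists G : sgraph, clique_number G = k /\ isomorphic T (TJ k G).

(* Main.v *)
Require Import Defs.
From mathcomp Require Import all_boot.
Set Implicit Arguments. Unset Strict Implicit. Unset Printing Implicit Defensive.

Lemma cliqueP (G : sgraph) (C : {set G}) :
  reflect (forall x y, x \in C -> y \in C -> x != y -> adj x y) (is_clique C).
Proof.
apply: (iffP forallP) => [H x y xC yC nxy | H x].
  by have /implyP/(_ xC)/forallP/(_ y)/implyP/(_ yC)/implyP/(_ nxy) := H x.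
apply/implyP => xC; apply/forallP => y; apply/implyP => yC; apply/implyP.
exact: H.
Qed.

Section AddV.
Variable G : sgraph.

Definition addv_adj : rel (option G) := fun x y =>
  match x, y with Some a, Some b => adj a b | None, None => false | _, _ => true end.

Lemma addv_sym : symmetric addv_adj.
Proof. by case=> [a|] [b|] //=; rewrite adj_sym. Qed.
Lemma addv_irr : irreflexive addv_adj.
Proof. by case=> [a|] //=; rewrite adj_irr. Qed.

Definition addv : sgraph := @SGraph (option G) addv_adj addv_sym addv_irr.

Definition proj (D : {set addv}) : {set G} := [set x | (Some x : addv) \in D].
Definition lift (C : {set G}) : {set addv} := None |: [set (Some x : addv) | x in C].

Lemma some_inj : injective (Some : G -> addv).
Proof. by move=> a b []. Qed.

Lemma mem_lift_some (C : {set G}) x : ((Some x : addv) \in lift C) = (x \in C).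
Proof. by rewrite /lift !inE (mem_imset _ _ some_inj). Qed.
Lemma mem_lift_none (C : {set G}) : ((None : addv) \in lift C).
Proof. by rewrite /lift !inE. Qed.

Lemma card_lift (C : {set G}) : #|lift C| = #|C|.+1.
Proof.
rewrite /lift cardsU1 card_imset; last exact: some_inj.
suff -> : (None : addv) \notin [set (Some x : addv) | x in C] by [].
by apply/imsetP => -[].
Qed.

Lemma proj_clique (D : {set addv}) : is_clique D -> is_clique (proj D).
Proof.
move/cliqueP => H; apply/cliqueP => x y; rewrite !inE => xD yD nxy.
apply: (H _ _ xD yD).
by apply: contra nxy => /eqP [->].
Qed.

Lemma lift_clique (C : {set G}) : is_clique C -> is_clique (lift C).
Proof.
move/cliqueP => H; apply/cliqueP => [[x|] [y|]] //=;
  rewrite ?mem_lift_some // => xC yC nxy.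
by apply: H => //; apply: contra nxy => /eqP ->.
Qed.

Lemma sub_lift_proj (D : {set addv}) : D \subset lift (proj D).
Proof.
by apply/subsetP => -[x|] xD; rewrite ?mem_lift_none // mem_lift_some inE.
Qed.

Lemma lift_projE (D : {set addv}) : (None : addv) \in D -> lift (proj D) = D.
Proof.
move=> ND; apply/setP => -[x|]; first by rewrite mem_lift_some inE.
by rewrite mem_lift_none ND.
Qed.

Lemma card_proj (D : {set addv}) : #|D| <= #|proj D|.+1.
Proof. by rewrite -card_lift; apply: subset_leq_card; apply: sub_lift_proj. Qed.

Lemma card_proj_noNone (D : {set addv}) : (None : addv) \notin D -> #|D| <= #|proj D|.
Proof.
move=> ND; rewrite -(card_imset (mem (proj D)) some_inj).
apply: subset_leq_card; apply/subsetP => -[x|] xD; last by rewrite xD in ND.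
by rewrite (mem_imset _ _ some_inj) inE.
Qed.

Lemma clique_number_addv : clique_number addv = (clique_number G).+1.
Proof.
apply/eqP; rewrite eqn_leq; apply/andP; split.
  rewrite {1}/clique_number; apply/bigmax_leqP => D /proj_clique cD.
  apply: leq_trans (card_proj D) _; rewrite ltnS.
  rewrite /clique_number. exact: (@leq_bigmax_cond _ (fun C : {set G} => is_clique C) (fun C => #|C|) (proj D) cD).
have [|C0 cC0 e] := @eq_bigmax_cond _ (fun C : {set G} => is_clique C) (fun C => #|C|).
  apply/card_gt0P; exists set0; rewrite unfold_in; apply/cliqueP => x y; by rewrite inE.
rewrite (_ : clique_number G = #|C0|); last exact: e.
rewrite -card_lift /clique_number.
apply: (@leq_bigmax_cond _ (fun C : {set addv} => is_clique C) (fun C => #|C|) (lift C0)).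
by apply: lift_clique.
Qed.

Lemma card_liftD (A B : {set G}) : #|lift A :\: lift B| = #|A :\: B|.
Proof.
rewrite -(card_imset (mem (A :\: B)) some_inj).
apply: eq_card => -[x|]; rewrite !inE ?mem_lift_some ?mem_lift_none ?(mem_imset _ _ some_inj) ?inE //.
by symmetry; apply/imsetP => -[].
Qed.

Variable k : nat.

Lemma liftk_proof (C : kclique G k) : is_clique (lift (val C)) && (#|lift (val C)| == k.+1).
Proof.
by move/andP: (valP C) => [c /eqP s]; rewrite lift_clique // card_lift s eqxx.
Qed.

Definition liftk (C : kclique G k) : kclique addv k.+1 := Sub (lift (val C)) (liftk_proof C).

Lemma liftk_adj (C D : kclique G k) : tj_adj (liftk C) (liftk D) = tj_adj C D.
Proof. by rewrite /tj_adj /= !card_liftD. Qed.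

Lemma liftk_inj : injective liftk.
Proof.
move=> C D /(congr1 val) /= e; apply: val_inj; apply/setP => x.
by rewrite -!mem_lift_some e.
Qed.

Lemma liftk_bij : clique_number G = k -> bijective liftk.
Proof.
move=> om; apply: inj_card_bij; first exact: liftk_inj.
have sub : predT \subset codom liftk.
  apply/subsetP => D _; move/andP: (valP D) => [cD /eqP sD].
  have cP := proj_clique cD.
  have ND : (None : addv) \in val D.
    apply/negPn/negP => ND.
    have := card_proj_noNone ND; rewrite sD.
    have h1 : #|proj (val D)| <= clique_number G.
      rewrite /clique_number.
      exact: (@leq_bigmax_cond _ (fun C : {set G} => is_clique C) (fun C => #|C|) _ cP).
    rewrite om in h1; move=> h2; have := leq_trans h2 h1; by rewrite ltnn.
  have sP : #|proj (val D)| == k.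
    by rewrite -eqSS -card_lift lift_projE // sD.
  have pr : is_clique (proj (val D)) && (#|proj (val D)| == k) by rewrite cP sP.
  apply/codomP; exists (Sub (proj (val D)) pr); apply: val_inj => /=.
  by rewrite lift_projE.
apply: leq_trans (subset_leq_card sub) _.
by rewrite card_codom //; exact: liftk_inj.
Qed.

End AddV.

Lemma step (k : nat) (T : sgraph) : max_TJ_graph k T -> max_TJ_graph k.+1 T.
Proof.
move=> [G [om [f [fb fa]]]].
exists (addv G); split; first by rewrite clique_number_addv om.
exists (fun x => liftk (f x)); split.
  apply: bij_comp => //; exact: liftk_bij.
by move=> x y; rewrite /= liftk_adj -fa.
Qed.

Theorem proposition4p12 (k : nat) (T : sgraph) :
  max_TJ_graph k T -> forall n : nat, k <= n -> max_TJ_graph n T.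
Proof.
move=> H n /subnKC <-; elim: (n - k) => [|m IH]; first by rewrite addn0.
by rewrite addnS; apply: step.
Qed.
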